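(* Let $A$ be a meet-complemented lattice in which $\Box x$ and $\Diamond x$ exist for every $x\in A$. Then for every $a\in A$: (i) $\Diamond a\le\neg\Box\neg a$; (ii) $\neg\Diamond a=\Box\neg a$; (iii) $\neg\neg\Diamond a=\neg\Box\neg a$; (iv) $\Box\neg\neg a=\neg\Diamond\neg a$; (v) $\Diamond\neg a\le\neg\Box a$; (vi) $\Box a\le\neg\Diamond\neg a$; (vii) $\neg\Diamond\neg a\le\Box\Diamond a$; (viii) $\Box\neg a\le\neg\Box\Diamond a$; (ix) $\Box\Diamond a\le\neg\Box\neg a$; (x) $\Diamond\neg\Box\neg a=\Diamond\Diamond a$.
   Context: A meet-complemented lattice is a lattice $(L,\le)$ (not necessarily distributive) such that for every $a\in L$ the element $\neg a=\max\{b\in L: a\wedge b\le c\ \text{for all } c\in L\}$ exists; it is bounded with bottom $0$ and top $1$. For $a\in L$, $\Box a=\max\{b\in L: a\vee\neg b=1\}$ and $\Diamond a=\min\{b\in L: \neg a\vee b=1\}$. *)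

(* Defs.v *)
From mathcomp Require Import all_boot all_order.
Set Implicit Arguments. Unset Strict Implicit. Unset Printing Implicit Defensive.
Import Order.TTheory.
Local Open Scope order_scope.

Definition is_max {d : Order.disp_t} {L : porderType d} (P : L -> Prop) (m : L) :=
  P m /\ forall b, P b -> b <= m.
Definition is_min {d : Order.disp_t} {L : porderType d} (P : L -> Prop) (m : L) :=
  P m /\ forall b, P b -> m <= b.

Definition is_meet_compl {d : Order.disp_t} {L : tbLatticeType d} (neg : L -> L) :=
  forall a : L, is_max (fun b => forall c : L, a `&` b <= c) (neg a).

Definition is_box {d : Order.disp_t} {L : tbLatticeType d} (neg box : L -> L) :=
  forall a : L, is_max (fun b => a `|` neg b = \top) (box a).

Definition is_dia {d : Order.disp_t} {L : tbLatticeType d} (neg dia : L -> L) :=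
  forall a : L, is_min (fun b => neg a `|` b = \top) (dia a).

(* Main.v *)
Require Import Defs.
From mathcomp Require Import all_boot all_order.
Import Order.TTheory.
Local Open Scope order_scope.

Theorem proposition9 (d : Order.disp_t) (A : tbLatticeType d)
  (neg box dia : A -> A)
  (Hneg : is_meet_compl neg) (Hbox : is_box neg box) (Hdia : is_dia neg dia) :
  forall a : A,
    dia a <= neg (box (neg a))
     /\ neg (dia a) = box (neg a)
     /\ neg (neg (dia a)) = neg (box (neg a))
     /\ box (neg (neg a)) = neg (dia (neg a))
     /\ dia (neg a) <= neg (box a)
     /\ box a <= neg (dia (neg a))
     /\ neg (dia (neg a)) <= box (dia a)
     /\ box (neg a) <= neg (box (dia a))
     /\ box (dia a) <= neg (box (neg a))
     /\ dia (neg (box (neg a))) = dia (dia a).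
Proof.
have nP : forall x y : A, (y <= neg x) = (x `&` y == \bot).
  move=> x y; apply/idP/idP.
  - move=> h; rewrite eq_le le0x andbT.
    apply: le_trans (_ : x `&` neg x <= _); first by rewrite leI2.
    by case: (Hneg x) => H _; apply: H.
  - move/eqP=> h; case: (Hneg x) => _; apply => c; by rewrite h le0x.
have nA : forall x y : A, x <= y -> neg y <= neg x.
  move=> x y h; rewrite nP; rewrite eq_le le0x andbT.
  apply: le_trans (_ : y `&` neg y <= _); first by rewrite leI2.
  by move: (lexx (neg y)); rewrite nP => /eqP ->.
have nn : forall x : A, x <= neg (neg x).
  by move=> x; rewrite nP meetC -nP.
have nnn : forall x : A, neg (neg (neg x)) = neg x.
  by move=> x; apply/eqP; rewrite eq_le nn andbT; apply: nA; apply: nn.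
have top1 : forall x : A, \top <= x -> x = \top.
  by move=> x h; apply/eqP; rewrite eq_le h lex1.
have L : forall p q : A, p `|` q = \top -> neg p `&` neg q = \bot.
  move=> p q h.
  set z := neg p `&` neg q.
  have hz : neg z = \top.
    apply: top1; rewrite -h leUx.
    apply/andP; split.
      by apply: le_trans (nn p) _; apply: nA; rewrite /z leIl.
    by apply: le_trans (nn q) _; apply: nA; rewrite /z leIr.
  have : z <= neg z by rewrite hz lex1.
  by rewrite nP meetxx => /eqP.
have boxI : forall x b : A, x `|` neg b = \top -> b <= box x.
  by move=> x b h; case: (Hbox x) => _; apply.
have boxE : forall x : A, x `|` neg (box x) = \top.
  by move=> x; case: (Hbox x).
have diaI : forall x b : A, neg x `|` b = \top -> dia x <= b.
  by move=> x b h; case: (Hdia x) => _; apply.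
have diaE : forall x : A, neg x `|` dia x = \top.
  by move=> x; case: (Hdia x).
have joinmono : forall x y y' : A, x `|` y = \top -> y <= y' -> x `|` y' = \top.
  move=> x y y' h hy; apply: top1; rewrite -h leUx leUl /=.
  exact: le_trans hy (leUr _ _).
have i : forall a, dia a <= neg (box (neg a)).
  by move=> a; apply: diaI; apply: boxE.
have ii : forall a, neg (dia a) = box (neg a).
  move=> a; apply/eqP; rewrite eq_le; apply/andP; split.
  - apply: boxI; apply: joinmono (diaE a) (nn _).
  - apply: le_trans (nn _) _; apply: nA; exact: i.
move=> a.
have iii : neg (neg (dia a)) = neg (box (neg a)) by rewrite ii.
have iv : box (neg (neg a)) = neg (dia (neg a)) by rewrite ii.
have v : dia (neg a) <= neg (box a).
  apply: diaI; rewrite joinC; apply: joinmono (nn a).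
  by rewrite joinC boxE.
have vi : box a <= neg (dia (neg a)).
  by apply: le_trans (nn _) _; apply: nA.
have L2 : forall x, neg x `&` neg (neg (box x)) = \bot.
  by move=> x; apply: L; apply: boxE.
have vii : neg (dia (neg a)) <= box (dia a).
  apply: boxI; apply: joinmono (_ : _ `|` neg a = _) _.
    by rewrite joinC diaE.
  rewrite nP; have := L _ _ (diaE (neg a)); rewrite nnn => E.
  by rewrite meetC E.
have viii : box (neg a) <= neg (box (dia a)).
  by rewrite -ii -[neg (box (dia a))]nnn nP meetC L2.
have ix : box (dia a) <= neg (box (neg a)).
  rewrite -iii; apply: le_trans (nn (box (dia a))) _; apply: nA.
  by rewrite ii.
have x : dia (neg (box (neg a))) = dia (dia a).
  rewrite -iii.
  apply/eqP; rewrite eq_le; apply/andP; split; apply: diaI.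
    by rewrite nnn diaE.
  by have := diaE (neg (neg (dia a))); rewrite nnn.
by do !split.
Qed.
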